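(* Let $a,c\in\mathbb{Z}$, $k,m,n\in\mathbb{N}$ with $km>n\ge1$, $t=\gcd(n,k)$, $n=n_1t$, $k=k_1t$, and $u_1,u_2\in\mathbb{Z}$ with $ku_1+nu_2=t$. Let $p$ be a prime with $p\nmid ackm(km-n)$ and $p\mid(\mathcal{C}-\mathcal{E})$. Let $\alpha_1,\alpha_2\in\mathbb{Z}$ satisfy $(km-n)\alpha_1\equiv nc\pmod{p^2}$ and $a(km-n)^m\alpha_2\equiv(kmc)^m\pmod{p^2}$, and let $\alpha\in\mathbb{Z}$ with $\alpha\equiv\alpha_1^{u_1}\alpha_2^{u_2}\pmod{p^2}$. Then $(\alpha^{k_1}+c)^m-a\alpha^{n_1}\equiv0\pmod{p^2}$ if and only if $\alpha_1^{n_1}\equiv\alpha_2^{k_1}\pmod{p^2}$.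
   Context: $\mathcal{C}=(km)^{k_1m}c^{k_1m-n_1}$, $\mathcal{E}=a^{k_1}n^{n_1}(km-n)^{k_1m-n_1}$. Since $\alpha_1,\alpha_2$ are units modulo $p^2$, negative powers are taken in $(\mathbb{Z}/p^2\mathbb{Z})^\times$. *)

(* Defs.v *)
From HB Require Import structures.
From mathcomp Require Import all_boot all_order all_algebra.
Set Implicit Arguments. Unset Strict Implicit. Unset Printing Implicit Defensive.

(* Main.v *)
Require Import Defs.
From HB Require Import structures.
From mathcomp Require Import all_boot all_order all_algebra.
From mathcomp Require Import zify ring.
Import Order.TTheory GRing.Theory Num.Theory.
Local Open Scope ring_scope.
Section Core.
Variable R : comUnitRingType.

Lemma pow_nil (e : R) (u : int) : e * e = 0 -> (1 + e) ^ u = 1 + e * u%:~R.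
Proof.
move=> e2.
have hn : forall n : nat, (1 + e) ^+ n = 1 + e * n%:R.
  elim=> [|n IH]; first by rewrite expr0 mulr0 addr0.
  rewrite exprS IH -natr1.
  have -> : (1 + e) * (1 + e * n%:R) = 1 + e * (n%:R + 1) + (e * e) * n%:R by ring.
  by rewrite e2 mul0r addr0.
case: u => n; first by rewrite -exprnP hn.
rewrite NegzE -invr_expz -exprnP hn.
apply: mulr1_eq. rewrite rmorphN /=.
have -> : (1 + e * n.+1%:R) * (1 + e * - n.+1%:R) = 1 - (e * e) * (n.+1%:R ^+ 2).
  ring.
by rewrite e2 mul0r subr0.
Qed.

Lemma binom_nil (e X Y : R) (m : nat) : e * e = 0 ->
  (X + e * Y) ^+ m * X = X ^+ m * (X + e * Y * m%:R).
Proof.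
move=> e2; elim: m => [|m IH]; first by rewrite !expr0 !mul1r mulr0 addr0.
rewrite exprSr -mulrA [_ * X]mulrC mulrA IH -natr1.
have -> : X ^+ m * (X + e * Y * m%:R) * (X + e * Y) =
   X ^+ m * (X * X + e * Y * (m%:R + 1) * X) + (e * e) * (Y * Y * m%:R * X^+m) by ring.
rewrite e2 mul0r addr0 exprSr; ring.
Qed.

Lemma unit_cancel (x g : R) : g \is a GRing.unit -> x * g = 0 -> x = 0.
Proof. by move=> ug h; rewrite -(mulrK ug x) h mul0r. Qed.

Lemma core (a c kk mm nn NN tt A1 A2 : R) (k1 n1 m : nat) (u1 u2 : int) :
  (k1%:Z * u1 + n1%:Z * u2 = 1)%R ->
  a \is a GRing.unit -> c \is a GRing.unit -> mm \is a GRing.unit ->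
  NN \is a GRing.unit -> tt \is a GRing.unit ->
  A1 \is a GRing.unit -> A2 \is a GRing.unit ->
  NN + nn = kk * mm -> kk * u1%:~R + nn * u2%:~R = tt -> mm = m%:R ->
  NN * A1 = nn * c -> a * NN ^+ m * A2 = (kk * mm * c) ^+ m ->
  (A1 ^+ n1 / A2 ^+ k1 - 1) * (A1 ^+ n1 / A2 ^+ k1 - 1) = 0 ->
  ((A1 ^ u1 * A2 ^ u2) ^+ k1 + c) ^+ m - a * (A1 ^ u1 * A2 ^ u2) ^+ n1 = 0
  <-> A1 ^+ n1 = A2 ^+ k1.
Proof.
move=> hu ua uc um uN ut u1A u2A hN ht hm h1 h2.
set d := A1 ^+ n1 / A2 ^+ k1.
set e := d - 1 => he.
have de : d = 1 + e by rewrite /e addrC subrK.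
have uX1 : A1 ^+ n1 \is a GRing.unit by rewrite unitrX.
have uX2 : A2 ^+ k1 \is a GRing.unit by rewrite unitrX.
have pw : forall u, d ^ u = 1 + e * u%:~R by move=> u; rewrite de pow_nil.
have dE : forall u, d ^ u = A1 ^ (n1%:Z * u) * A2 ^ (- (k1%:Z * u)).
  move=> u; rewrite /d exprMz_comm ?unitrV //; last exact: mulrC.
  by rewrite exprz_inv !exprnP !exprz_exp mulrN.
have H1 : (A1 ^ u1 * A2 ^ u2) ^+ k1 = A1 * d ^ (- u2).
  rewrite exprMn dE !exprnP !exprz_exp mulrA -{2}(expr1z A1) -exprzDr //.
  congr (A1 ^ _ * A2 ^ _); lia.
have H2 : (A1 ^ u1 * A2 ^ u2) ^+ n1 = A2 * d ^ u1.
  rewrite exprMn dE !exprnP !exprz_exp mulrCA -{2}(expr1z A2) -exprzDr //.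
  congr (A1 ^ _ * A2 ^ _); lia.
rewrite H1 H2 !pw.
set X := A1 + c.
have hNX : NN * X = kk * mm * c by rewrite /X mulrDr h1 -mulrDl addrC hN.
have hX : X ^+ m = a * A2.
  apply: (mulrI (unitrX m uN)); rewrite -exprMn hNX -h2; by rewrite [a * _]mulrC -mulrA.
have eq1 : A1 ^+ n1 = A2 ^+ k1 <-> e = 0.
  split=> [h|h]; first by rewrite /e /d h divrr // subrr.
  by rewrite -(divrK uX2 (A1 ^+ n1)) -/d de h addr0 mul1r.
rewrite eq1.
have hXd : X = A1 + c by [].
clearbody X e d.
have -> : A1 * (1 + e * (- u2)%:~R) + c = X + e * (A1 * - u2%:~R).
  by rewrite mulrNz hXd; ring.
split=> [hf|h0]; last first.
  by rewrite h0 !mul0r !addr0 !mulr1 hX subrr.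
have key : ((X + e * (A1 * - u2%:~R)) ^+ m - a * (A2 * (1 + e * u1%:~R))) * (X * NN)
   = - (e * (a * A2 * mm * c * tt)).
  have -> : ((X + e * (A1 * - u2%:~R)) ^+ m - a * (A2 * (1 + e * u1%:~R))) * (X * NN)
     = ((X + e * (A1 * - u2%:~R)) ^+ m * X) * NN - a * A2 * (1 + e * u1%:~R) * (NN * X) by ring.
  rewrite binom_nil // hX hNX -ht hm.
  have -> : a * A2 * (X + e * (A1 * - u2%:~R) * m%:R) * NN =
     a * A2 * (NN * X) + a * A2 * e * m%:R * (- u2%:~R) * (NN * A1) by ring.
  rewrite hNX h1 hm; ring.
rewrite hf mul0r in key.
have : e * (a * A2 * mm * c * tt) = 0 by rewrite -[LHS]opprK -key oppr0.
by apply: unit_cancel; rewrite !unitrM ua u2A um uc ut.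
Qed.

Lemma rel_CE (a c kk mm nn NN A1 A2 : R) (k1 n1 m : nat) :
  NN \is a GRing.unit -> (n1 <= k1 * m)%N ->
  NN * A1 = nn * c -> a * NN ^+ m * A2 = (kk * mm * c) ^+ m ->
  a ^+ k1 * nn ^+ n1 * NN ^+ (k1 * m - n1) * A2 ^+ k1
  = (kk * mm) ^+ (k1 * m) * c ^+ (k1 * m - n1) * A1 ^+ n1.
Proof.
move=> uN hle h1 h2.
apply: (mulIr (unitrX n1 uN)).
have eN : NN ^+ (k1 * m) = NN ^+ (k1 * m - n1) * NN ^+ n1 by rewrite -exprD subnK.
have ec : c ^+ (k1 * m) = c ^+ (k1 * m - n1) * c ^+ n1 by rewrite -exprD subnK.
have eL : a ^+ k1 * nn ^+ n1 * NN ^+ (k1 * m - n1) * A2 ^+ k1 * NN ^+ n1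
   = nn ^+ n1 * (a * NN ^+ m * A2) ^+ k1.
  rewrite !exprMn -exprM [(m * k1)%N]mulnC eN; ring.
have eR : (kk * mm) ^+ (k1 * m) * c ^+ (k1 * m - n1) * A1 ^+ n1 * NN ^+ n1
   = (kk * mm) ^+ (k1 * m) * c ^+ (k1 * m - n1) * (NN * A1) ^+ n1.
  rewrite [(NN * A1) ^+ _]exprMn; move: (k1 * m - n1)%N (k1 * m)%N => K1 K2; ring.
rewrite eL eR h1 h2 !exprMn -!exprM [(m * k1)%N]mulnC ec; move: (k1 * m - n1)%N (k1 * m)%N => K1 K2; ring.
Qed.
End Core.
Arguments rel_CE {R a c kk mm nn NN A1 A2 k1 n1 m}.
Arguments core {R a c kk mm nn NN tt A1 A2 k1 n1 m u1 u2}.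
Lemma zq0 (q : nat) (z : int) : (1 < q)%N -> ((z%:~R : 'Z_q) == 0) = (q%:Z %| z)%Z.
Proof.
move=> hq; rewrite dvdzE /=.
case: z => n /=.
  rewrite -[n%:~R]/(n%:R) -(Zp_nat_mod hq).
  apply/eqP/idP => [h|h]; last by move: h => /dvdnP [k ->]; rewrite modnMl.
  have := congr1 (@nat_of_ord _) h; rewrite val_Zp_nat // modn_mod /= => h'.
  by apply/dvdnP; exists (n %/ q)%N; rewrite {1}(divn_eq n q) h' addn0.
rewrite NegzE rmorphN oppr_eq0 /=.
rewrite -[(n.+1)%:~R]/(n.+1%:R) -(Zp_nat_mod hq).
apply/eqP/idP => [h|h]; last by move: h => /dvdnP [k ->]; rewrite modnMl.
have := congr1 (@nat_of_ord _) h; rewrite val_Zp_nat // modn_mod /= => h'.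
by apply/dvdnP; exists (n.+1 %/ q)%N; rewrite {1}(divn_eq n.+1 q) h' addn0.
Qed.

Lemma modE (q : nat) (x y : int) : (1 < q)%N ->
  (x == y %[mod q%:Z])%Z = ((x%:~R : 'Z_q) == y%:~R).
Proof. by move=> hq; rewrite eqz_mod_dvd -zq0 // rmorphB /= subr_eq0. Qed.

Lemma unitZ (p : nat) (x : int) : prime p -> ~~ (p%:Z %| x)%Z ->
  (x%:~R : 'Z_(p ^ 2)) \is a GRing.unit.
Proof.
move=> pp; have hq : (1 < p ^ 2)%N by rewrite (ltn_exp2l 0) // prime_gt1.
rewrite dvdzE /=.
have cop : forall n : nat, ~~ (p %| n)%N -> ((n%:R : 'Z_(p^2)) \is a GRing.unit).
  by move=> n hn; rewrite unitZpE // coprime_pexpl // prime_coprime.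
case: x => n /= hn; first exact: cop.
by rewrite NegzE rmorphN unitrN; apply: cop.
Qed.

Theorem mainTheorem14
  (a c : int) (k m n t n1 k1 : nat) (u1 u2 : int) (p : nat)
  (alpha1 alpha2 alpha : int) :
  (n < k * m)%N -> (1 <= n)%N ->
  t = gcdn n k -> n = (n1 * t)%N -> k = (k1 * t)%N ->
  k%:Z * u1 + n%:Z * u2 = t%:Z ->
  prime p ->
  ~~ (p%:Z %| a * c * k%:Z * m%:Z * ((k * m)%:Z - n%:Z))%Z ->
  (p%:Z %| ((k * m)%:Z ^+ (k1 * m) * c ^+ (k1 * m - n1)
            - a ^+ k1 * n%:Z ^+ n1 * ((k * m)%:Z - n%:Z) ^+ (k1 * m - n1)))%Z ->
  (((k * m)%:Z - n%:Z) * alpha1 == n%:Z * c %[mod (p ^ 2)%:Z])%Z ->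
  (a * ((k * m)%:Z - n%:Z) ^+ m * alpha2 == ((k * m)%:Z * c) ^+ m
     %[mod (p ^ 2)%:Z])%Z ->
  (alpha%:~R : 'Z_(p ^ 2)) = (alpha1%:~R : 'Z_(p ^ 2)) ^ u1 * (alpha2%:~R : 'Z_(p ^ 2)) ^ u2 ->
  ((alpha ^+ k1 + c) ^+ m - a * alpha ^+ n1 == 0 %[mod (p ^ 2)%:Z])%Z
  <-> (alpha1 ^+ n1 == alpha2 ^+ k1 %[mod (p ^ 2)%:Z])%Z.
Proof.
move=> hnkm hn1 ht hn hk hbez pp hndiv hCE hA1 hA2 hal.
have hq : (1 < p ^ 2)%N by rewrite (ltn_exp2l 0) // prime_gt1.
have tpos : (0 < t)%N by rewrite ht gcdn_gt0 hn1.
have n1pos : (0 < n1)%N by rewrite lt0n; apply/eqP => h0; move: hn1; rewrite hn h0.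
have hle : (n1 <= k1 * m)%N.
  have : (n1 * t < (k1 * m) * t)%N by rewrite -hn mulnAC -hk.
  by rewrite ltn_pmul2r // => /ltnW.
have hb1 : k1%:Z * u1 + n1%:Z * u2 = 1.
  have tnz : t%:Z != 0 by rewrite eqz_nat -lt0n.
  apply: (mulfI tnz); rewrite mulr1 -[in RHS]hbez hk hn !PoszM; ring.
rewrite !PoszM in hndiv hCE hA1 hA2.
rewrite !modE // in hA1 hA2 *.
move: hA1 hA2 => /eqP hA1 /eqP hA2.
have U := @unitZ p _ pp hndiv.
rewrite !rmorphM /= !unitrM in U.
case/andP: U => /andP[/andP[/andP[ua uc] uk] um] uN.
have ut : (t%:~R : 'Z_(p ^ 2)) \is a GRing.unit.
  by move: uk; rewrite hk PoszM rmorphM unitrM => /andP[].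
rewrite !rmorphM !rmorphXn /= in hA1 hA2.
rewrite !rmorphM /= in hA2.
have hN : (k%:Z * m%:Z - n%:Z)%:~R + n%:~R = k%:~R * m%:~R :> 'Z_(p ^ 2).
  by rewrite rmorphB /= subrK rmorphM.
have htt : k%:~R * u1%:~R + n%:~R * u2%:~R = t%:~R :> 'Z_(p ^ 2).
  by rewrite -!rmorphM -rmorphD /= hbez.
case/dvdzP: hCE => w hw.
have hw' := congr1 (fun z : int => (z%:~R : 'Z_(p ^ 2))) hw.
rewrite /= rmorphB !rmorphM !rmorphXn /= !rmorphM /= in hw'.
set x := (w%:~R * p%:~R : 'Z_(p ^ 2)) in hw'.
have x2 : x * x = 0.
  have pp0 : (p%:R : 'Z_(p ^ 2)) * p%:R = 0 by rewrite -natrM mulnn pchar_Zp.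
  rewrite /x; have -> : w%:~R * p%:~R * (w%:~R * p%:~R) = (w%:~R * w%:~R) * ((p%:R : 'Z_(p ^ 2)) * p%:R).
    by rewrite -!pmulrn; ring.
  by rewrite pp0 mulr0.
set Cc := (k%:~R * m%:~R) ^+ (k1 * m) * c%:~R ^+ (k1 * m - n1) : 'Z_(p ^ 2) in hw'.
set Ee := (a%:~R ^+ k1 * n%:~R ^+ n1 * (k%:Z * m%:Z - n%:Z)%:~R ^+ (k1 * m - n1)) : 'Z_(p ^ 2) in hw'.
have uC : Cc \is a GRing.unit by rewrite /Cc unitrM; apply/andP; split; apply: unitrX; rewrite ?unitrM ?uk ?um ?uc.
have uE : Ee \is a GRing.unit.
  have -> : Ee = Cc * (1 - x / Cc) by rewrite mulrBr mulr1 mulrCA divrr // mulr1 -hw' opprB addrC subrK.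
  rewrite unitrM uC /=; apply/unitrP; exists (1 + x / Cc).
  have e1 : (1 + x / Cc) * (1 - x / Cc) = 1.
    have -> : (1 + x / Cc) * (1 - x / Cc) = 1 - (x * x) * (Cc^-1 * Cc^-1) by ring.
    by rewrite x2 mul0r subr0.
  by split => //; rewrite mulrC.
have un : (n%:~R : 'Z_(p ^ 2)) \is a GRing.unit.
  by move: uE; rewrite /Ee !unitrM (unitrX_pos _ n1pos) => /andP[/andP[]].
have u1A : (alpha1%:~R : 'Z_(p ^ 2)) \is a GRing.unit.
  have : ((k%:Z * m%:Z - n%:Z)%:~R * alpha1%:~R : 'Z_(p ^ 2)) \is a GRing.unit.
    by rewrite hA1 unitrM un uc.
  by rewrite unitrM => /andP[].
have u2A : (alpha2%:~R : 'Z_(p ^ 2)) \is a GRing.unit.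
  have : (a%:~R * (k%:Z * m%:Z - n%:Z)%:~R ^+ m * alpha2%:~R : 'Z_(p ^ 2)) \is a GRing.unit.
    by rewrite hA2 unitrX // !unitrM uk um uc.
  by rewrite unitrM => /andP[].
have rel := rel_CE uN hle hA1 hA2.
have he : ((alpha1%:~R : 'Z_(p ^ 2)) ^+ n1 / (alpha2%:~R) ^+ k1 - 1)
        * ((alpha1%:~R : 'Z_(p ^ 2)) ^+ n1 / (alpha2%:~R) ^+ k1 - 1) = 0.
  have uX2 : (alpha2%:~R : 'Z_(p ^ 2)) ^+ k1 \is a GRing.unit by rewrite unitrX.
  have hd : Cc * ((alpha1%:~R : 'Z_(p ^ 2)) ^+ n1 / (alpha2%:~R) ^+ k1 - 1) = - x.
    rewrite mulrBr mulr1 mulrA /Cc -rel -/Ee mulrK // -hw' opprB //.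
  apply: (@unit_cancel _ _ (Cc * Cc)); first by rewrite unitrM uC.
  have -> : forall y : 'Z_(p ^ 2), y * y * (Cc * Cc) = (Cc * y) * (Cc * y) by move=> y; ring.
  by rewrite hd mulrNN x2.
have := core hb1 ua uc um uN ut u1A u2A hN htt (erefl _) hA1 hA2 he.
rewrite -hal => H.
rewrite rmorph0 rmorphB rmorphM !rmorphXn rmorphD /= !rmorphXn /=.
by split => /eqP h; apply/eqP; apply H.
Qed.
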